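(* Let $\sigma=\{ijkh\}$ be a truncated tetrahedron with weight $\Phi$ taking values in $[0,\frac{\pi}{2}]$ on its six edges, and let $(r_i,r_j,r_k,r_h)\in\mathbb{R}^4_{>0}$. The hyper-ideal tetrahedron with edge lengths $l_{\mu\nu}=\cosh^{-1}(\sinh r_\mu\sinh r_\nu+\cos\Phi_{\mu\nu}\cosh r_\mu\cosh r_\nu)$ is non-degenerate in $\mathbb{H}^3$ if and only if $Q_2>0$.
   Context: A hyper-ideal tetrahedron is a compact convex polyhedron in $\mathbb{H}^3$ diffeomorphic to a truncated tetrahedron with four right-angled hyperbolic hexagonal faces and four hyperbolic triangular vertex triangles $\triangle_i,\triangle_j,\triangle_k,\triangle_h$, each orthogonal to its three adjacent hexagons; $l_{\mu\nu}$ is the length of the edge joining $\triangle_\mu$ and $\triangle_\nu$. The lengths are called non-degenerate if there is such a (non-degenerate) hyper-ideal tetrahedron with these edge lengths. Notation: $t_\nu=\tanh r_\nu$; $a=\cos\Phi_{ij}$, $b=\cos\Phi_{ik}$, $c=\cos\Phi_{ih}$, $d=\cos\Phi_{jk}$, $e=\cos\Phi_{jh}$, $f=\cos\Phi_{kh}$. Define $Q_3=2abef+2acdf+2bcde+2abd+2ace+2bcf+2def+a^2+b^2+c^2+d^2+e^2+f^2-a^2f^2-b^2e^2-c^2d^2-1$ and $Q_2=t_i^2(1-d^2-e^2-f^2-2def)+t_j^2(1-b^2-c^2-f^2-2bcf)+t_k^2(1-a^2-c^2-e^2-2ace)+t_h^2(1-a^2-b^2-d^2-2abd)+2t_it_j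[(1-f^2)a+bd+ce+bef+cdf]+2t_it_k[(1-e^2)b+ad+cf+aef+cde]+2t_it_h[(1-d^2)c+ae+bf+adf+bde]+2t_jt_k[(1-c^2)d+ab+ef+acf+bce]+2t_jt_h[(1-b^2)e+ac+df+abf+bcd]+2t_kt_h[(1-a^2)f+bc+de+abe+acd]+Q_3$.
   Formalization: For all six edges, $\sinh r_\mu\sinh r_\nu+\cos\Phi_{\mu\nu}\cosh r_\mu\cosh r_\nu$ is assumed to exceed 1, so every edge length $l_{\mu\nu}$ exists and is positive. The statement above fails without it. *)

(* Defs.v *)
From Stdlib Require Import Reals.
Open Scope R_scope.

Definition vec4 : Type := (R * R * R * R)%type.

Definition mink (x y : vec4) : R :=
  let '(x0, x1, x2, x3) := x in
  let '(y0, y1, y2, y3) := y in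
  x0 * y0 + x1 * y1 + x2 * y2 - x3 * y3.

Definition lin_comb4 (a b c d : R) (u v w z : vec4) : vec4 :=
  let '(u0, u1, u2, u3) := u in
  let '(v0, v1, v2, v3) := v in
  let '(w0, w1, w2, w3) := w in
  let '(z0, z1, z2, z3) := z in
  (a*u0 + b*v0 + c*w0 + d*z0, a*u1 + b*v1 + c*w1 + d*z1,
   a*u2 + b*v2 + c*w2 + d*z2, a*u3 + b*v3 + c*w3 + d*z3).

Definition lin_indep4 (u v w z : vec4) : Prop :=
  forall a b c d : R, lin_comb4 a b c d u v w z = (0, 0, 0, 0) ->
    a = 0 /\ b = 0 /\ c = 0 /\ d = 0.

(* A (non-degenerate) hyper-ideal tetrahedron in the hyperboloid model of H^3
   is determined by its four hyper-ideal vertices, encoded by the unit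
   space-like vectors v_mu (<v_mu,v_mu> = 1) polar to the truncating planes
   (the planes of the vertex triangles), which are linearly independent
   (non-degeneracy) and pairwise ultraparallel; the length of the edge joining
   triangle_mu and triangle_nu is the distance l_{mu nu} > 0 between the polar
   planes, i.e. <v_mu, v_nu> = - cosh l_{mu nu}.
   [nondeg_hyperideal lij lik lih ljk ljh lkh] : there is a non-degenerate
   hyper-ideal tetrahedron with these six edge lengths. *)
Definition nondeg_hyperideal (lij lik lih ljk ljh lkh : R) : Prop :=
  0 < lij /\ 0 < lik /\ 0 < lih /\ 0 < ljk /\ 0 < ljh /\ 0 < lkh /\
  exists vi vj vk vh : vec4,
    mink vi vi = 1 /\ mink vj vj = 1 /\ mink vk vk = 1 /\ mink vh vh = 1 /\
    mink vi vj = - cosh lij /\ mink vi vk = - cosh lik /\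
    mink vi vh = - cosh lih /\ mink vj vk = - cosh ljk /\
    mink vj vh = - cosh ljh /\ mink vk vh = - cosh lkh /\
    lin_indep4 vi vj vk vh.

Definition Q3 (a b c d e f : R) : R :=
  2*a*b*e*f + 2*a*c*d*f + 2*b*c*d*e + 2*a*b*d + 2*a*c*e + 2*b*c*f + 2*d*e*f
  + a^2 + b^2 + c^2 + d^2 + e^2 + f^2 - a^2*f^2 - b^2*e^2 - c^2*d^2 - 1.

Definition Q2 (ti tj tk th a b c d e f : R) : R :=
  ti^2 * (1 - d^2 - e^2 - f^2 - 2*d*e*f)
  + tj^2 * (1 - b^2 - c^2 - f^2 - 2*b*c*f)
  + tk^2 * (1 - a^2 - c^2 - e^2 - 2*a*c*e)
  + th^2 * (1 - a^2 - b^2 - d^2 - 2*a*b*d)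
  + 2*ti*tj * ((1 - f^2)*a + b*d + c*e + b*e*f + c*d*f)
  + 2*ti*tk * ((1 - e^2)*b + a*d + c*f + a*e*f + c*d*e)
  + 2*ti*th * ((1 - d^2)*c + a*e + b*f + a*d*f + b*d*e)
  + 2*tj*tk * ((1 - c^2)*d + a*b + e*f + a*c*f + b*c*e)
  + 2*tj*th * ((1 - b^2)*e + a*c + d*f + a*b*f + b*c*d)
  + 2*tk*th * ((1 - a^2)*f + b*c + d*e + a*b*e + a*c*d)
  + Q3 a b c d e f.

Definition cosh_len (rmu rnu Phi : R) : R :=
  sinh rmu * sinh rnu + cos Phi * cosh rmu * cosh rnu.

(* Main.v *)
Require Import Defs.
From Stdlib Require Import Reals Lra Psatz.
Open Scope R_scope.

Definition det3 (a11 a12 a13 a21 a22 a23 a31 a32 a33 : R) : R :=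
  a11*(a22*a33 - a23*a32) - a12*(a21*a33 - a23*a31) + a13*(a21*a32 - a22*a31).
Definition det4 (a11 a12 a13 a14 a21 a22 a23 a24 a31 a32 a33 a34 a41 a42 a43 a44 : R) : R :=
  a11 * det3 a22 a23 a24 a32 a33 a34 a42 a43 a44
  - a12 * det3 a21 a23 a24 a31 a33 a34 a41 a43 a44
  + a13 * det3 a21 a22 a24 a31 a32 a34 a41 a42 a44
  - a14 * det3 a21 a22 a23 a31 a32 a33 a41 a42 a43.
Definition gdet4 (d1 d2 d3 d4 g12 g13 g14 g23 g24 g34 : R) : R :=
  det4 d1 g12 g13 g14 g12 d2 g23 g24 g13 g23 d3 g34 g14 g24 g34 d4.
Definition mk (x0 x1 x2 x3 y0 y1 y2 y3 : R) : R := x0*y0+x1*y1+x2*y2-x3*y3.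

Lemma gram_det (u0 u1 u2 u3 v0 v1 v2 v3 w0 w1 w2 w3 z0 z1 z2 z3 : R) :
  gdet4 (mk u0 u1 u2 u3 u0 u1 u2 u3) (mk v0 v1 v2 v3 v0 v1 v2 v3) (mk w0 w1 w2 w3 w0 w1 w2 w3) (mk z0 z1 z2 z3 z0 z1 z2 z3) (mk u0 u1 u2 u3 v0 v1 v2 v3) (mk u0 u1 u2 u3 w0 w1 w2 w3) (mk u0 u1 u2 u3 z0 z1 z2 z3) (mk v0 v1 v2 v3 w0 w1 w2 w3) (mk v0 v1 v2 v3 z0 z1 z2 z3) (mk w0 w1 w2 w3 z0 z1 z2 z3)
  = - (det4 u0 u1 u2 u3 v0 v1 v2 v3 w0 w1 w2 w3 z0 z1 z2 z3)^2.
Proof. unfold gdet4, det4, det3, mk. ring. Qed.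

Lemma kern0 (u0 u1 u2 u3 v0 v1 v2 v3 w0 w1 w2 w3 z0 z1 z2 z3 : R) :
  det4 u0 u1 u2 u3 v0 v1 v2 v3 w0 w1 w2 w3 z0 z1 z2 z3 = 0 ->
  lin_comb4 ((det3 v1 v2 v3 w1 w2 w3 z1 z2 z3)) (- (det3 u1 u2 u3 w1 w2 w3 z1 z2 z3)) ((det3 u1 u2 u3 v1 v2 v3 z1 z2 z3)) (- (det3 u1 u2 u3 v1 v2 v3 w1 w2 w3)) (u0,u1,u2,u3) (v0,v1,v2,v3) (w0,w1,w2,w3) (z0,z1,z2,z3) = (0,0,0,0).
Proof. intro H. unfold lin_comb4. unfold det3.
  f_equal; [f_equal; [f_equal|]|];
  first [ring | (rewrite <- H; unfold det4, det3; ring)]. Qed.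

Lemma kern1 (u0 u1 u2 u3 v0 v1 v2 v3 w0 w1 w2 w3 z0 z1 z2 z3 : R) :
  det4 u0 u1 u2 u3 v0 v1 v2 v3 w0 w1 w2 w3 z0 z1 z2 z3 = 0 ->
  lin_comb4 (- (det3 v0 v2 v3 w0 w2 w3 z0 z2 z3)) ((det3 u0 u2 u3 w0 w2 w3 z0 z2 z3)) (- (det3 u0 u2 u3 v0 v2 v3 z0 z2 z3)) ((det3 u0 u2 u3 v0 v2 v3 w0 w2 w3)) (u0,u1,u2,u3) (v0,v1,v2,v3) (w0,w1,w2,w3) (z0,z1,z2,z3) = (0,0,0,0).
Proof. intro H. unfold lin_comb4. unfold det3.
  f_equal; [f_equal; [f_equal|]|];
  first [ring | (rewrite <- H; unfold det4, det3; ring)]. Qed.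

Lemma kern2 (u0 u1 u2 u3 v0 v1 v2 v3 w0 w1 w2 w3 z0 z1 z2 z3 : R) :
  det4 u0 u1 u2 u3 v0 v1 v2 v3 w0 w1 w2 w3 z0 z1 z2 z3 = 0 ->
  lin_comb4 ((det3 v0 v1 v3 w0 w1 w3 z0 z1 z3)) (- (det3 u0 u1 u3 w0 w1 w3 z0 z1 z3)) ((det3 u0 u1 u3 v0 v1 v3 z0 z1 z3)) (- (det3 u0 u1 u3 v0 v1 v3 w0 w1 w3)) (u0,u1,u2,u3) (v0,v1,v2,v3) (w0,w1,w2,w3) (z0,z1,z2,z3) = (0,0,0,0).
Proof. intro H. unfold lin_comb4. unfold det3.
  f_equal; [f_equal; [f_equal|]|];
  first [ring | (rewrite <- H; unfold det4, det3; ring)]. Qed.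

Lemma kern3 (u0 u1 u2 u3 v0 v1 v2 v3 w0 w1 w2 w3 z0 z1 z2 z3 : R) :
  det4 u0 u1 u2 u3 v0 v1 v2 v3 w0 w1 w2 w3 z0 z1 z2 z3 = 0 ->
  lin_comb4 (- (det3 v0 v1 v2 w0 w1 w2 z0 z1 z2)) ((det3 u0 u1 u2 w0 w1 w2 z0 z1 z2)) (- (det3 u0 u1 u2 v0 v1 v2 z0 z1 z2)) ((det3 u0 u1 u2 v0 v1 v2 w0 w1 w2)) (u0,u1,u2,u3) (v0,v1,v2,v3) (w0,w1,w2,w3) (z0,z1,z2,z3) = (0,0,0,0).
Proof. intro H. unfold lin_comb4. unfold det3.
  f_equal; [f_equal; [f_equal|]|];
  first [ring | (rewrite <- H; unfold det4, det3; ring)]. Qed.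

Lemma cb3 (u0 u1 u2 u3 v0 v1 v2 v3 w0 w1 w2 w3 : R) :
  det3 (mk u0 u1 u2 u3 u0 u1 u2 u3) (mk u0 u1 u2 u3 v0 v1 v2 v3) (mk u0 u1 u2 u3 w0 w1 w2 w3) (mk u0 u1 u2 u3 v0 v1 v2 v3) (mk v0 v1 v2 v3 v0 v1 v2 v3) (mk v0 v1 v2 v3 w0 w1 w2 w3) (mk u0 u1 u2 u3 w0 w1 w2 w3) (mk v0 v1 v2 v3 w0 w1 w2 w3) (mk w0 w1 w2 w3 w0 w1 w2 w3)
  = (det3 u0 u1 u2 v0 v1 v2 w0 w1 w2)^2 - (det3 u1 u2 u3 v1 v2 v3 w1 w2 w3)^2 - (det3 u0 u2 u3 v0 v2 v3 w0 w2 w3)^2 - (det3 u0 u1 u3 v0 v1 v3 w0 w1 w3)^2.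
Proof. unfold det3, mk. ring. Qed.

Lemma det_lin d4 g12 g13 g14 g23 g24 g34 :
  gdet4 1 1 1 d4 g12 g13 g14 g23 g24 g34 =
  gdet4 1 1 1 1 g12 g13 g14 g23 g24 g34 + (d4 - 1) * det3 1 g12 g13 g12 1 g23 g13 g23 1.
Proof. unfold gdet4, det4, det3. ring. Qed.

Lemma q2_link Ci Cj Ck Ch ti tj tk th a b c d e f :
  gdet4 (Ci^2*(1-ti^2)) (Cj^2*(1-tj^2)) (Ck^2*(1-tk^2)) (Ch^2*(1-th^2))
    (-(Ci*Cj*(ti*tj+a))) (-(Ci*Ck*(ti*tk+b))) (-(Ci*Ch*(ti*th+c)))
    (-(Cj*Ck*(tj*tk+d))) (-(Cj*Ch*(tj*th+e))) (-(Ck*Ch*(tk*th+f)))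
  = - (Ci*Cj*Ck*Ch)^2 * Q2 ti tj tk th a b c d e f.
Proof. unfold gdet4, det4, det3, Q2, Q3. ring. Qed.

Lemma det3_neg P Q U : 1 < P -> 1 < Q -> 1 < U ->
  det3 1 (-P) (-Q) (-P) 1 (-U) (-Q) (-U) 1 < 0.
Proof.
  intros. unfold det3.
  assert (0 < P*Q*U) by (apply Rmult_lt_0_compat; [apply Rmult_lt_0_compat|]; lra).
  nra.
Qed.

Lemma mink_mk x0 x1 x2 x3 y0 y1 y2 y3 :
  mink (x0,x1,x2,x3) (y0,y1,y2,y3) = mk x0 x1 x2 x3 y0 y1 y2 y3.
Proof. reflexivity. Qed.

Lemma necessary P12 P13 P14 P23 P24 P34 :
  1 < P12 -> 1 < P13 -> 1 < P14 -> 1 < P23 -> 1 < P24 -> 1 < P34 ->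
  (exists vi vj vk vh : vec4,
    mink vi vi = 1 /\ mink vj vj = 1 /\ mink vk vk = 1 /\ mink vh vh = 1 /\
    mink vi vj = - P12 /\ mink vi vk = - P13 /\
    mink vi vh = - P14 /\ mink vj vk = - P23 /\
    mink vj vh = - P24 /\ mink vk vh = - P34 /\
    lin_indep4 vi vj vk vh) ->
  gdet4 1 1 1 1 (-P12) (-P13) (-P14) (-P23) (-P24) (-P34) < 0.
Proof.
  intros H12 H13 H14 H23 H24 H34
    [[[[u0 u1] u2] u3] [[[[v0 v1] v2] v3] [[[[w0 w1] w2] w3] [[[[z0 z1] z2] z3]
     (E11 & E22 & E33 & E44 & E12 & E13 & E14 & E23 & E24 & E34 & Hind)]]]].
  rewrite !mink_mk in *.
  pose proof (gram_det u0 u1 u2 u3 v0 v1 v2 v3 w0 w1 w2 w3 z0 z1 z2 z3) as G.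
  rewrite E11, E22, E33, E44, E12, E13, E14, E23, E24, E34 in G.
  rewrite G.
  assert (ND : det4 u0 u1 u2 u3 v0 v1 v2 v3 w0 w1 w2 w3 z0 z1 z2 z3 <> 0).
  { intro H0.
    destruct (Hind _ _ _ _ (kern0 _ _ _ _ _ _ _ _ _ _ _ _ _ _ _ _ H0)) as (_&_&_&D0).
    destruct (Hind _ _ _ _ (kern1 _ _ _ _ _ _ _ _ _ _ _ _ _ _ _ _ H0)) as (_&_&_&D1).
    destruct (Hind _ _ _ _ (kern2 _ _ _ _ _ _ _ _ _ _ _ _ _ _ _ _ H0)) as (_&_&_&D2).
    destruct (Hind _ _ _ _ (kern3 _ _ _ _ _ _ _ _ _ _ _ _ _ _ _ _ H0)) as (_&_&_&D3).
    pose proof (cb3 u0 u1 u2 u3 v0 v1 v2 v3 w0 w1 w2 w3) as CB.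
    rewrite E11, E22, E33, E12, E13, E23 in CB.
    assert (M0 : det3 u1 u2 u3 v1 v2 v3 w1 w2 w3 = 0) by lra.
    assert (M1 : det3 u0 u2 u3 v0 v2 v3 w0 w2 w3 = 0) by lra.
    assert (M2 : det3 u0 u1 u3 v0 v1 v3 w0 w1 w3 = 0) by lra.
    assert (M3 : det3 u0 u1 u2 v0 v1 v2 w0 w1 w2 = 0) by lra.
    rewrite M0, M1, M2, M3 in CB.
    pose proof (det3_neg P12 P13 P23 H12 H13 H23). lra. }
  set (D := det4 u0 u1 u2 u3 v0 v1 v2 v3 w0 w1 w2 w3 z0 z1 z2 z3) in *.
  assert (0 < D*D) by (destruct (Rlt_or_le 0 D); nra). nra.
Qed.

Lemma construct P12 P13 P14 P23 P24 P34 :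
  1 < P12 -> 1 < P13 -> 1 < P14 -> 1 < P23 -> 1 < P24 -> 1 < P34 ->
  gdet4 1 1 1 1 (-P12) (-P13) (-P14) (-P23) (-P24) (-P34) < 0 ->
  (exists vi vj vk vh : vec4,
    mink vi vi = 1 /\ mink vj vj = 1 /\ mink vk vk = 1 /\ mink vh vh = 1 /\
    mink vi vj = - P12 /\ mink vi vk = - P13 /\
    mink vi vh = - P14 /\ mink vj vk = - P23 /\
    mink vj vh = - P24 /\ mink vk vh = - P34 /\
    lin_indep4 vi vj vk vh).
Proof.
  intros H12 H13 H14 H23 H24 H34 Hdet.
  set (D3 := det3 1 (-P12) (-P13) (-P12) 1 (-P23) (-P13) (-P23) 1).
  assert (HD3 : D3 < 0) by (apply det3_neg; lra).
  set (s := sqrt (P12*P12 - 1)).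
  assert (Hs : 0 < s) by (apply sqrt_lt_R0; nra).
  assert (Hss : s*s = P12*P12 - 1) by (apply sqrt_sqrt; nra).
  set (x := - P13).
  set (w := (P23 + P12*P13)/s).
  set (Y := 1 - x*x + w*w).
  assert (HY : Y * (s*s) = - D3).
  { assert (Hws : w*s = P23+P12*P13) by (unfold w; field; lra).
    replace (Y*(s*s)) with ((1-x*x)*(s*s) + (w*s)*(w*s)) by (unfold Y; ring).
    rewrite Hws, Hss. unfold x, D3, det3. ring. }
  assert (HYp : 0 < Y) by nra.
  set (y := sqrt Y).
  assert (Hy : 0 < y) by (apply sqrt_lt_R0; lra).
  assert (Hyy : y*y = Y) by (apply sqrt_sqrt; lra).
  set (x' := - P14).
  set (w' := (P24 + P12*P14)/s).
  set (y' := (- P34 - x*x' + w*w')/y).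
  set (Z := 1 - x'*x' - y'*y' + w'*w').
  assert (G := gram_det 1 0 0 0 (-P12) 0 0 s x y 0 w x' y' 0 w').
  assert (E11 : mk 1 0 0 0 1 0 0 0 = 1) by (unfold mk; ring).
  assert (E22 : mk (-P12) 0 0 s (-P12) 0 0 s = 1) by (unfold mk; nra).
  assert (E33 : mk x y 0 w x y 0 w = 1) by (unfold mk, Y in *; nra).
  assert (E44 : mk x' y' 0 w' x' y' 0 w' = 1 - Z) by (unfold mk, Z; ring).
  assert (E12 : mk 1 0 0 0 (-P12) 0 0 s = - P12) by (unfold mk; ring).
  assert (E13 : mk 1 0 0 0 x y 0 w = - P13) by (unfold mk, x; ring).
  assert (E14 : mk 1 0 0 0 x' y' 0 w' = - P14) by (unfold mk, x'; ring).
  assert (E23 : mk (-P12) 0 0 s x y 0 w = - P23) by (unfold mk, x, w; field; lra).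
  assert (E24 : mk (-P12) 0 0 s x' y' 0 w' = - P24) by (unfold mk, x', w'; field; lra).
  assert (E34 : mk x y 0 w x' y' 0 w' = - P34) by (unfold mk, y'; field; lra).
  rewrite E11, E22, E33, E44, E12, E13, E14, E23, E24, E34 in G.
  rewrite det_lin in G.
  assert (Hz0 : det4 1 0 0 0 (-P12) 0 0 s x y 0 w x' y' 0 w' = 0) by (unfold det4, det3; ring).
  rewrite Hz0 in G. fold D3 in G.
  assert (HZ : 0 < Z) by nra.
  set (z := sqrt Z).
  assert (Hz : 0 < z) by (apply sqrt_lt_R0; lra).
  assert (Hzz : z*z = Z) by (apply sqrt_sqrt; lra).
  exists (1,0,0,0), (-P12,0,0,s), (x,y,0,w), (x',y',z,w').
  rewrite !mink_mk.
  split; [exact E11|]. split; [exact E22|]. split; [exact E33|].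
  split; [unfold mk, Z in *; nra|].
  split; [exact E12|]. split; [exact E13|].
  split; [unfold mk in *; lra|]. split; [exact E23|].
  split; [unfold mk in *; lra|]. split; [unfold mk in *; lra|].
  intros a b c d H. cbn in H.
  injection H as H0 H1 H2 H3.
  assert (Hd : d = 0).
  { assert (d*z = 0) by lra. destruct (Rmult_integral _ _ H) as [|]; lra. }
  subst d.
  assert (Hc : c = 0).
  { assert (c*y = 0) by lra. destruct (Rmult_integral _ _ H) as [|]; lra. }
  subst c.
  assert (Hb : b = 0).
  { assert (b*s = 0) by lra. destruct (Rmult_integral _ _ H) as [|]; lra. }
  subst b. repeat split; lra.
Qed.

Lemma cosh_pos' x : 0 < cosh x.
Proof. unfold cosh. pose proof (exp_pos x). pose proof (exp_pos (-x)). lra. Qed.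

Lemma cosh_sinh' x : cosh x ^2 * (1 - tanh x ^2) = 1.
Proof.
  pose proof (cosh_pos' x). unfold tanh.
  replace (cosh x ^2 * (1 - (sinh x / cosh x)^2)) with (cosh x * cosh x - sinh x * sinh x)
    by (field; lra).
  unfold cosh, sinh. rewrite exp_Ropp. pose proof (exp_pos x). field. lra.
Qed.

Lemma cosh_gt1 x : 0 < x -> 1 < cosh x.
Proof.
  intro Hx. unfold cosh. rewrite exp_Ropp.
  assert (He : 1 < exp x) by (rewrite <- exp_0; apply exp_increasing; exact Hx).
  set (e := exp x) in *.
  assert (e + / e > 2).
  { replace (e + / e) with ((e*e + 1)/e) by (field; lra).
    apply Rlt_gt. apply Rmult_lt_reg_r with e; [lra|].
    unfold Rdiv. rewrite Rmult_assoc, Rinv_l by lra. nra. }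
  lra.
Qed.

Lemma cl a b p : cosh_len a b p = cosh a * cosh b * (tanh a * tanh b + cos p).
Proof.
  unfold cosh_len, tanh. pose proof (cosh_pos' a). pose proof (cosh_pos' b). field. lra.
Qed.

Theorem lemma2p2
  (Phi_ij Phi_ik Phi_ih Phi_jk Phi_jh Phi_kh : R)
  (r_i r_j r_k r_h : R)
  (lij lik lih ljk ljh lkh : R) :
  0 <= Phi_ij <= PI / 2 -> 0 <= Phi_ik <= PI / 2 -> 0 <= Phi_ih <= PI / 2 ->
  0 <= Phi_jk <= PI / 2 -> 0 <= Phi_jh <= PI / 2 -> 0 <= Phi_kh <= PI / 2 ->
  0 < r_i -> 0 < r_j -> 0 < r_k -> 0 < r_h ->
  0 < lij -> cosh lij = cosh_len r_i r_j Phi_ij ->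
  0 < lik -> cosh lik = cosh_len r_i r_k Phi_ik ->
  0 < lih -> cosh lih = cosh_len r_i r_h Phi_ih ->
  0 < ljk -> cosh ljk = cosh_len r_j r_k Phi_jk ->
  0 < ljh -> cosh ljh = cosh_len r_j r_h Phi_jh ->
  0 < lkh -> cosh lkh = cosh_len r_k r_h Phi_kh ->
  (nondeg_hyperideal lij lik lih ljk ljh lkh <->
   0 < Q2 (tanh r_i) (tanh r_j) (tanh r_k) (tanh r_h)
          (cos Phi_ij) (cos Phi_ik) (cos Phi_ih)
          (cos Phi_jk) (cos Phi_jh) (cos Phi_kh)).
Proof.
  intros _ _ _ _ _ _ _ _ _ _ Lij Cij Lik Cik Lih Cih Ljk Cjk Ljh Cjh Lkh Ckh.
  assert (Link : gdet4 1 1 1 1 (- cosh lij) (- cosh lik) (- cosh lih)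
                   (- cosh ljk) (- cosh ljh) (- cosh lkh)
    = - (cosh r_i * cosh r_j * cosh r_k * cosh r_h)^2 *
      Q2 (tanh r_i) (tanh r_j) (tanh r_k) (tanh r_h)
          (cos Phi_ij) (cos Phi_ik) (cos Phi_ih)
          (cos Phi_jk) (cos Phi_jh) (cos Phi_kh)).
  { rewrite Cij, Cik, Cih, Cjk, Cjh, Ckh, !cl, <- q2_link, !cosh_sinh'. reflexivity. }
  assert (Pp : 0 < (cosh r_i * cosh r_j * cosh r_k * cosh r_h)^2).
  { pose proof (cosh_pos' r_i). pose proof (cosh_pos' r_j).
    pose proof (cosh_pos' r_k). pose proof (cosh_pos' r_h).
    apply pow_lt. apply Rmult_lt_0_compat; [apply Rmult_lt_0_compat; [apply Rmult_lt_0_compat|]|]; assumption. }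
  pose proof (cosh_gt1 _ Lij). pose proof (cosh_gt1 _ Lik). pose proof (cosh_gt1 _ Lih).
  pose proof (cosh_gt1 _ Ljk). pose proof (cosh_gt1 _ Ljh). pose proof (cosh_gt1 _ Lkh).
  split.
  - intros (_&_&_&_&_&_&Hex).
    pose proof (necessary _ _ _ _ _ _ H H0 H1 H2 H3 H4 Hex) as N.
    rewrite Link in N. nra.
  - intro HQ. unfold nondeg_hyperideal.
    do 6 (split; [assumption|]).
    apply construct; try assumption.
    rewrite Link. nra.
Qed.
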